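(* In the construction described in the context, assume Assumption 4.3 and Assumption 4.4 hold. Then for every extended state $(\xi,\vec\theta)\in\Xi\times\{-1,1\}^n$ and every $i\in\mathcal{A}(\xi)$ there exists $m\in\mathbb{N}$ with $$\mathcal{K}^m\big((\xi,\vec\theta),(\xi,R_i(\vec\theta))\big)>0.$$
   Context: Let $\Xi$ be a countable set, $\tilde\pi$ a probability measure on $\Xi$ and $\tilde Q$ a Markov kernel on $\Xi$. Assumption 4.3: (i) $\tilde\pi(\xi)>0$ for all $\xi$; (ii) $\tilde Q(\xi,\xi')\ne0$ iff $\tilde Q(\xi',\xi)\ne0$; (iii) the chain generated by $\tilde Q$ is irreducible. State graph $\mathcal{G}=(\mathcal{V},\mathcal{E})$, $\mathcal{V}=\Xi$, $\mathcal{E}=\{(\xi,\xi'):\tilde Q(\xi,\xi')>0\}$. For $i=1,\dots,n$, $\mathcal{G}_i^+=(\mathcal{V}_i,\mathcal{E}_i^+)$ are directed subgraphs of $\mathcal{G}$ without isolated vertices; $\mathcal{E}_i^-=\{(u,v):(v,u)\in\mathcal{E}_i^+\}$, $\mathcal{E}_i=\mathcal{E}_i^+\cup\mathcal{E}_i^-$, with $\mathcal{V}=\bigcup_i\mathcal{V}_i$, $\mathcal{E}=\bigcup_i\mathcal{E}_i$. $\mathcal{N}_i^{\pm}(\xi)=\{\xi':(\xi,\xi')\in\mathcal{E}_i^{\pm}\}$, and $\mathcal{N}_i^\theta$ is $\mathcal{N}_i^+$ for $\theta=+1$, $\mathcal{N}_i^-$ for $\theta=-1$. Extended space $\mathcal{X}=\Xi\times\{-1,1\}^n$;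 $\mathcal{X}_i=\mathcal{V}_i\times\{-1,1\}^n$; $R_i$ flips the sign of the $i$-th component of $\vec\theta$; $S_i(\xi,\vec\theta)=(\xi,R_i(\vec\theta))$. For $(\xi,\vec\theta)\in\mathcal{X}_i$: $Q_i((\xi,\vec\theta),(\xi',\vec\theta'))=\tilde Q(\xi,\xi')/\tilde Q(\xi,\mathcal{N}_i^{\theta_i}(\xi))$ if $\xi'\in\mathcal{N}_i^{\theta_i}(\xi)$, $\vec\theta'=\vec\theta$; $=1$ if $\mathcal{N}_i^{\theta_i}(\xi)=\emptyset$, $\xi'=\xi$, $\vec\theta'=R_i(\vec\theta)$; $=0$ otherwise. Weights $\tilde\omega_i(\xi)=\tilde Q(\xi,\mathcal{N}_i^+(\xi))+\tilde Q(\xi,\mathcal{N}_i^-(\xi))$ (assumed to sum to one over $i$); $\mathcal{A}(\xi)=\{i:\tilde\omega_i(\xi)>0\}$. For $x=(\xi,\vec\theta)\in\mathcal{X}_i$, $x'=(\xi',\vec\theta')$: $r_i(x,x')=\frac{\tilde\omega_i(\xi')\tilde\pi(\xi')Q_i((\xi',R_i\vec\theta'),(\xi,R_i\vec\theta))}{\tilde\omega_i(\xi)\tilde\pi(\xi)Q_i((\xi,\vec\theta),(\xi',\vec\theta'))}$, $P_i(x,x')=Q_i(x,x')\min(1,r_i(x,x'))+\mathbb{1}_{\{S_i(x)\}}(x')[1-\sum_{\tilde x}Q_i(x,\tilde x)\min(1,r_i(x,\tilde x))]$, and $\mathcal{K}((\xi,\vec\theta),\cdot)=\sum_i\tilde\omega_i(\xi)P_i((\xi,\vec\theta),\cdot)$.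 Assumption 4.4: for every $(\xi,\vec\theta)\in\mathcal{X}$ and $i\in\mathcal{A}(\xi)$ there exist $m\in\mathbb{N}$, $\xi'\in\Xi$ with $P_i^m((\xi,\vec\theta),(\xi',R_i(\vec\theta)))>0$. *)

(* Defs.v *)
From HB Require Import structures.
From mathcomp Require Import all_boot all_order all_algebra.
From mathcomp Require Import boolp classical_sets reals ereal esum.
Set Implicit Arguments. Unset Strict Implicit. Unset Printing Implicit Defensive.
Import Order.TTheory GRing.Theory Num.Theory.
Local Open Scope classical_set_scope.
Local Open Scope ring_scope.

(* sign vectors in {-1,1}^n : true encodes +1, false encodes -1 *)
Definition sgvec (n : nat) := {ffun 'I_n -> bool}.

Definition flip (n : nat) (i : 'I_n) (th : sgvec n) : sgvec n :=
  [ffun j => if j == i then ~~ th j else th j].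

Definition ext (Xi : countType) (n : nat) := (Xi * sgvec n)%type.

Definition Sflip (Xi : countType) (n : nat) (i : 'I_n) (x : ext Xi n) : ext Xi n :=
  (x.1, flip i x.2).

Definition kmass (R : realType) (T : choiceType) (Q : T -> T -> R) (x : T)
  (A : set T) : R := fine (\esum_(y in A) (Q x y)%:E).

Fixpoint kpow (R : realType) (T : choiceType) (k : T -> T -> R) (m : nat)
  (x y : T) {struct m} : \bar R :=
  match m with
  | 0 => ((x == y)%:R)%:E
  | m'.+1 => \esum_(z in [set: T]) (kpow k m' x z * (k z y)%:E)%E
  end.

(* neighbourhoods N_i^+, N_i^-, N_i^theta; Ep i is the edge set E_i^+ *)
Definition Nplus (Xi : countType) (n : nat) (Ep : 'I_n -> set (Xi * Xi))
  (i : 'I_n) (xi : Xi) : set Xi := [set y | Ep i (xi, y)].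
Definition Nminus (Xi : countType) (n : nat) (Ep : 'I_n -> set (Xi * Xi))
  (i : 'I_n) (xi : Xi) : set Xi := [set y | Ep i (y, xi)].
Definition Ntheta (Xi : countType) (n : nat) (Ep : 'I_n -> set (Xi * Xi))
  (i : 'I_n) (b : bool) (xi : Xi) : set Xi :=
  if b then Nplus Ep i xi else Nminus Ep i xi.

Definition omega (R : realType) (Xi : countType) (n : nat) (Q : Xi -> Xi -> R)
  (Ep : 'I_n -> set (Xi * Xi)) (i : 'I_n) (xi : Xi) : R :=
  kmass Q xi (Nplus Ep i xi) + kmass Q xi (Nminus Ep i xi).

(* Q_i on X_i (set to 0 outside X_i, where it is never used with positive weight) *)
Definition Qi (R : realType) (Xi : countType) (n : nat) (Q : Xi -> Xi -> R)
  (Ep : 'I_n -> set (Xi * Xi)) (V : 'I_n -> set Xi) (i : 'I_n)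
  (x x' : ext Xi n) : R :=
  let: (xi, th) := x in
  let: (xi', th') := x' in
  if `[< V i xi >] then
    let N := Ntheta Ep i (th i) xi in
    if `[< N xi' >] && (th' == th) then Q xi xi' / kmass Q xi N
    else if `[< N = set0 >] && (xi' == xi) && (th' == flip i th) then 1
    else 0
  else 0.

Definition ri (R : realType) (Xi : countType) (n : nat) (pi : Xi -> R)
  (Q : Xi -> Xi -> R) (Ep : 'I_n -> set (Xi * Xi)) (V : 'I_n -> set Xi)
  (i : 'I_n) (x x' : ext Xi n) : R :=
  (omega Q Ep i x'.1 * pi x'.1 * Qi Q Ep V i (Sflip i x') (Sflip i x)) /
  (omega Q Ep i x.1 * pi x.1 * Qi Q Ep V i x x').

Definition Pi (R : realType) (Xi : countType) (n : nat) (pi : Xi -> R)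
  (Q : Xi -> Xi -> R) (Ep : 'I_n -> set (Xi * Xi)) (V : 'I_n -> set Xi)
  (i : 'I_n) (x x' : ext Xi n) : R :=
  Qi Q Ep V i x x' * Num.min 1 (ri pi Q Ep V i x x') +
  (x' == Sflip i x)%:R *
  (1 - fine (\esum_(y in [set: ext Xi n])
               (Qi Q Ep V i x y * Num.min 1 (ri pi Q Ep V i x y))%:E)).

Definition Kmix (R : realType) (Xi : countType) (n : nat) (pi : Xi -> R)
  (Q : Xi -> Xi -> R) (Ep : 'I_n -> set (Xi * Xi)) (V : 'I_n -> set Xi)
  (x x' : ext Xi n) : R :=
  \sum_(i < n) omega Q Ep i x.1 * Pi pi Q Ep V i x x'.

(* Main.v *)
Require Import Defs.
From HB Require Import structures.
From mathcomp Require Import all_boot all_order all_algebra.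
From mathcomp Require Import boolp classical_sets reals ereal esum.
From mathcomp Require Import lra cardinality fsbigop.
Set Implicit Arguments. Unset Strict Implicit. Unset Printing Implicit Defensive.
Import Order.TTheory GRing.Theory Num.Theory.
Local Open Scope classical_set_scope.
Local Open Scope ring_scope.

Inductive star (T : Type) (r : T -> T -> Prop) : T -> T -> Prop :=
| star_refl (x : T) : star r x x
| star_step (x y z : T) : r x y -> star r y z -> star r x z.
Arguments star_refl {T r x}.
Arguments star_step {T r x y z}.

Lemma star_trans T (r : T -> T -> Prop) x y z :
  star r x y -> star r y z -> star r x z.
Proof. by elim=> // a b c rab _ IH /IH; apply: star_step. Qed.

Lemma star1 T (r : T -> T -> Prop) x y : r x y -> star r x y.
Proof. by move=> h; apply: star_step h star_refl. Qed.

Lemma star_rind T (r : T -> T -> Prop) x y : star r x y ->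
  forall P : T -> Prop, P x -> (forall a b, P a -> r a b -> P b) -> P y.
Proof.
elim=> // a b c rab _ IH P Pa cl; apply: IH => //; exact: cl Pa rab.
Qed.

Lemma star_snoc T (r : T -> T -> Prop) x y z : star r x y -> r y z -> star r x z.
Proof. by move=> h1 h2; exact: (star_trans h1 (star1 h2)). Qed.

Lemma kpow_ge (R : realType) (T : choiceType) (k : T -> T -> R) m x z y :
  (kpow k m x z * (k z y)%:E <= kpow k m.+1 x y)%E.
Proof.
rewrite /=; apply: esum_ge; exists [set z].
  by split; [exact: finite_set1|].
by rewrite fsbig_set1.
Qed.

Lemma kpow_ge0 (R : realType) (T : choiceType) (k : T -> T -> R) m x y :
  (forall a b, 0 <= k a b) -> (0 <= kpow k m x y)%E.
Proof.
move=> k0; elim: m y => [|m IH] y /=; first by rewrite lee_fin ler0n.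
apply: esum_ge0 => z _; apply: mule_ge0 => //; rewrite lee_fin; exact: k0.
Qed.

Lemma kpow_path (R : realType) (T : choiceType) (k : T -> T -> R) m x y :
  (forall a b, 0 <= k a b) -> (0 < kpow k m x y)%E ->
  star (fun a b => 0 < k a b) x y.
Proof.
move=> k0; elim: m y => [|m IH] y /=.
  by case: eqP => [->|_]; [constructor|rewrite ltxx].
case: (pselect (exists z, (0 < kpow k m x z * (k z y)%:E)%E)) => [[z Hz]|Hn] H.
  have h1 := kpow_ge0 m x z k0; have h2 : (0 <= (k z y)%:E)%E by rewrite lee_fin.
  have a0 : kpow k m x z != 0%E.
    by apply/eqP => e; move: Hz; rewrite e mul0e ltxx.
  have b0 : k z y != 0.
    by apply/eqP => e; move: Hz; rewrite e mule0 ltxx.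
  have := IH z; rewrite lt_neqAle eq_sym a0 h1 => /(_ isT) sxz.
  have kp : 0 < k z y by rewrite lt_neqAle eq_sym b0 k0.
  exact: star_snoc sxz kp.
exfalso; move: H; apply/negP; rewrite -leNgt.
rewrite (le_trans (le_esum (b := fun=> 0%E) _)) ?esum1 // => z _.
rewrite leNgt; apply/negP => hz; apply: Hn; by exists z.
Qed.

Lemma path_kpow (R : realType) (T : choiceType) (k : T -> T -> R) x y :
  star (fun a b => 0 < k a b) x y -> exists m, (0 < kpow k m x y)%E.
Proof.
move=> s; apply: (@star_rind _ _ x y s (fun b => exists m, (0 < kpow k m x b)%E)).
  by exists 0%N; rewrite /= eqxx lte_fin ltr01.
move=> a b [m hm] hab; exists m.+1.
apply: (lt_le_trans _ (kpow_ge k m x a b)).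
by apply: mule_gt0 => //; rewrite lte_fin.
Qed.

Lemma esumZ_le (R : realType) (T : choiceType) (D : set T) (a : T -> \bar R) (c : R) :
  0 <= c -> (forall i, (0 <= a i)%E) ->
  (\esum_(i in D) (c%:E * a i) <= c%:E * \esum_(i in D) a i)%E.
Proof.
move=> c0 a0; apply: ge_ereal_sup => _ [X [finX XD] <-].
rewrite fsbig_finite //= -ge0_sume_distrr; last by move=> *; exact: a0.
apply: lee_wpmul2l; first by rewrite lee_fin.
rewrite -fsbig_finite //; apply: ereal_sup_ubound; by exists X.
Qed.
Theorem lemmaB2 (R : realType) (Xi : countType) (n : nat)
  (pi : Xi -> R) (Q : Xi -> Xi -> R)
  (Ep : 'I_n -> set (Xi * Xi)) (V : 'I_n -> set Xi)
  (* pi is a probability measure on Xi *)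
  (pi_ge0 : forall xi, 0 <= pi xi)
  (pi_sum1 : \esum_(xi in [set: Xi]) (pi xi)%:E = 1%E)
  (* Q is a Markov kernel on Xi *)
  (Q_ge0 : forall xi xi', 0 <= Q xi xi')
  (Q_sum1 : forall xi, \esum_(xi' in [set: Xi]) (Q xi xi')%:E = 1%E)
  (* G_i^+ = (V_i, E_i^+) are directed subgraphs of G without isolated vertices *)
  (Ep_sub : forall i e, Ep i e -> 0 < Q e.1 e.2)
  (V_def : forall i xi, V i xi <-> exists xi', Ep i (xi, xi') \/ Ep i (xi', xi))
  (V_cover : forall xi, exists i, V i xi)
  (E_cover : forall xi xi', 0 < Q xi xi' ->
     exists i, Ep i (xi, xi') \/ Ep i (xi', xi))
  (* the weights sum to one *)
  (omega_sum1 : forall xi, \sum_(i < n) omega Q Ep i xi = 1)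
  (* Assumption 4.3 *)
  (A43_i : forall xi, 0 < pi xi)
  (A43_ii : forall xi xi', Q xi xi' != 0 <-> Q xi' xi != 0)
  (A43_iii : forall xi xi', exists m, (0 < kpow Q m xi xi')%E)
  (* Assumption 4.4 *)
  (A44 : forall (xi : Xi) (th : sgvec n) (i : 'I_n), 0 < omega Q Ep i xi ->
     exists m (xi' : Xi),
       (0 < kpow (Pi pi Q Ep V i) m (xi, th) (xi', flip i th))%E) :
  forall (xi : Xi) (th : sgvec n) (i : 'I_n), 0 < omega Q Ep i xi ->
    exists m, (0 < kpow (Kmix pi Q Ep V) m (xi, th) (xi, flip i th))%E.
Proof.
have kmass_ge0 : forall xi A, 0 <= kmass Q xi A.
  by move=> xi A; rewrite /kmass; apply: fine_ge0; apply: esum_ge0 => y _; rewrite lee_fin.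
have kmassE : forall xi A, \esum_(y in A) (Q xi y)%:E = (kmass Q xi A)%:E.
  move=> xi A; rewrite /kmass fineK //.
  have e0 : (0 <= \esum_(y in A) (Q xi y)%:E)%E by apply: esum_ge0 => y _; rewrite lee_fin.
  rewrite ge0_fin_numE //; apply: (le_lt_trans (y := 1%E)); last exact: ltey.
  rewrite esum_mkcond -(Q_sum1 xi); apply: le_esum => y _; case: ifP => _ //.
  by rewrite lee_fin.
have omega_ge0 : forall i xi, 0 <= omega Q Ep i xi.
  by move=> i xi; rewrite /omega; apply: addr_ge0.
have Qi_ge0 : forall i x y, 0 <= Qi Q Ep V i x y.
  move=> i [xi th] [xi' th']; rewrite /Qi; case: ifP => _ //.
  case: ifP => _; first by apply: divr_ge0.
  by case: ifP => _.
have ri_ge0 : forall i x y, 0 <= ri pi Q Ep V i x y.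
  by move=> i x y; rewrite /ri; apply: divr_ge0; apply: mulr_ge0 => //; apply: mulr_ge0.
have min_ge0 : forall r : R, 0 <= r -> 0 <= Num.min 1 r.
  by move=> r r0; rewrite le_min ler01 r0.
have sumQi_le1 : forall i x,
    (\esum_(y in [set: ext Xi n]) (Qi Q Ep V i x y)%:E <= 1)%E.
  move=> i [xi th].
  have Qi0 : forall y : ext Xi n, (0 <= (Qi Q Ep V i (xi, th) y)%:E)%E.
    by move=> y; rewrite lee_fin.
  case: (pselect (V i xi)) => Vx; last first.
    by rewrite esum1 // => -[xi' th'] _; rewrite /Qi asboolF.
  case: (pselect (Ntheta Ep i (th i) xi = set0)) => N0.
    rewrite (esumID [set (xi, flip i th)]) //.
    rewrite setTI esum_set1 // esum1 ?adde0.
      by rewrite lee_fin /Qi asboolT // N0 asboolF //= asboolT // !eqxx.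
    move=> [xi' th'] [_ /= hne]; rewrite /Qi asboolT // N0 asboolF //=.
    case: ifP => // /andP[/andP[_ /eqP e1] /eqP e2].
    by case: hne; rewrite e1 e2.
  rewrite (esumID [set y | y.2 = th]) //.
  rewrite [X in (_ + X)%E]esum1 ?adde0; last first.
    move=> [xi' th'] [_ /= hne]; rewrite /Qi asboolT //.
    case: ifP => [/andP[_ /eqP]//|_].
    by rewrite (asboolF N0).
  rewrite setTI (_ : [set y | y.2 = th] = (fun z => (z, th)) @` setT); last first.
    apply/seteqP; split => [[a b] /= ->|_ [z _ <-]] //; by exists a.
  rewrite esum_image; last by move=> a b _ _ [].
  set k := kmass Q xi (Ntheta Ep i (th i) xi).
  apply: (@le_trans _ _ (\esum_(z in setT) ((k^-1)%:E *
     (if z \in Ntheta Ep i (th i) xi then (Q xi z)%:E else 0%E)))%E).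
    apply: le_esum => z _; rewrite /Qi asboolT // eqxx andbT.
    case: (pselect (Ntheta Ep i (th i) xi z)) => Nz.
      by rewrite asboolT // mem_set // -EFinM lee_fin mulrC.
    by rewrite asboolF // memNset // (asboolF N0) /= mule0.
  apply: le_trans (esumZ_le _ _ _) _.
  - by rewrite invr_ge0 kmass_ge0.
  - by move=> z; case: ifP => _ //; rewrite lee_fin.
  rewrite -esum_mkcond kmassE -EFinM lee_fin.
  have [->|k0] := eqVneq k 0; first by rewrite invr0 mul0r ler01.
  by rewrite mulVf.
have fine_le1 : forall i x, fine (\esum_(y in [set: ext Xi n])
     (Qi Q Ep V i x y * Num.min 1 (ri pi Q Ep V i x y))%:E) <= 1.
  move=> i x.
  set e := esum _ _.
  have e0 : (0 <= e)%E.
    by apply: esum_ge0 => y _; rewrite lee_fin; apply: mulr_ge0 => //; apply: min_ge0.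
  have e1 : (e <= 1)%E.
    apply: le_trans (sumQi_le1 i x); apply: le_esum => y _; rewrite lee_fin.
    rewrite -[X in _ <= X]mulr1; apply: ler_wpM2l => //.
    by rewrite ge_min lexx.
  have ee : e = (fine e)%:E.
    by rewrite fineK // ge0_fin_numE // (le_lt_trans e1) // ltey.
  by rewrite -lee_fin -ee.
have P2_ge0 : forall i x y, 0 <= (y == Sflip i x)%:R * (1 - fine (\esum_(y in [set: ext Xi n])
     (Qi Q Ep V i x y * Num.min 1 (ri pi Q Ep V i x y))%:E)).
  by move=> i x y; apply: mulr_ge0 => //; rewrite subr_ge0.
have Pi_ge0 : forall i x y, 0 <= Pi pi Q Ep V i x y.
  move=> i x y; rewrite /Pi; apply: addr_ge0; last exact: P2_ge0.
  by apply: mulr_ge0 => //; apply: min_ge0.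
have K_ge : forall i x y, omega Q Ep i x.1 * Pi pi Q Ep V i x y <= Kmix pi Q Ep V x y.
  move=> i x y; rewrite /Kmix (bigD1 i) //= lerDl; apply: sumr_ge0 => j _.
  exact: mulr_ge0.
have K_ge0 : forall x y, 0 <= Kmix pi Q Ep V x y.
  by move=> x y; rewrite /Kmix; apply: sumr_ge0 => j _; apply: mulr_ge0.
have SS : forall (i : 'I_n) (x : ext Xi n), Sflip i (Sflip i x) = x.
  move=> i [xi th]; rewrite /Sflip /=; apply: (congr1 (pair xi)); apply/ffunP => j.
  by rewrite !ffunE; case: (j == i) => //=; rewrite negbK.
have classify : forall (i : 'I_n) (x y : ext Xi n), 0 < Pi pi Q Ep V i x y ->
    y = Sflip i x \/
    (y.2 = x.2 /\ Qi Q Ep V i x y * Num.min 1 (ri pi Q Ep V i x y) != 0).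
  move=> i x y hp; case: (pselect (y = Sflip i x)) => [->|ne]; first by left.
  right; move: hp; rewrite /Pi [X in nat_of_bool X](_ : _ = false); last by apply/eqP.
  rewrite mul0r addr0 => hp.
  have hne := lt0r_neq0 hp; split => //.
  have : Qi Q Ep V i x y != 0 by apply: contraNneq hne => ->; rewrite mul0r.
  move: ne; case: x {hp hne} => xi th; case: y => xi' th'; rewrite /Qi /Sflip /=.
  case: ifP => _; last by rewrite eqxx.
  case: ifP => [/andP[_ /eqP ->]//|_].
  case: ifP => [/andP[/andP[_ /eqP ->] /eqP ->] /(_ erefl)[]|_ _]; by rewrite eqxx.
have r_ne0 : forall (i : 'I_n) (x y : ext Xi n),
    Qi Q Ep V i x y * Num.min 1 (ri pi Q Ep V i x y) != 0 -> ri pi Q Ep V i x y != 0.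
  by move=> i x y; apply: contraNneq => ->; rewrite (min_r ler01) mulr0.
have omega_ne0 : forall (i : 'I_n) (x y : ext Xi n),
    Qi Q Ep V i x y * Num.min 1 (ri pi Q Ep V i x y) != 0 -> omega Q Ep i y.1 != 0.
  by move=> i x y /r_ne0; rewrite /ri; apply: contraNneq => ->; rewrite !mul0r.
have rev : forall (i : 'I_n) (x y : ext Xi n),
    Qi Q Ep V i x y * Num.min 1 (ri pi Q Ep V i x y) != 0 ->
    0 < Pi pi Q Ep V i (Sflip i y) (Sflip i x).
  move=> i x y h; have := r_ne0 _ _ _ h; rewrite /ri.
  rewrite mulf_eq0 negb_or invr_eq0 => /andP[nn dn].
  have q0 : Qi Q Ep V i (Sflip i y) (Sflip i x) != 0.
    by move: nn; rewrite mulf_eq0 negb_or => /andP[].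
  have r0 : 0 < ri pi Q Ep V i (Sflip i y) (Sflip i x).
    rewrite lt_neqAle ri_ge0 andbT eq_sym /ri !SS.
    by rewrite mulf_neq0 // invr_neq0.
  have h1 : 0 < Qi Q Ep V i (Sflip i y) (Sflip i x) *
      Num.min 1 (ri pi Q Ep V i (Sflip i y) (Sflip i x)).
    apply: mulr_gt0; first by rewrite lt_neqAle eq_sym q0 Qi_ge0.
    by rewrite lt_min ltr01 r0.
  rewrite /Pi; apply: (lt_le_trans h1); rewrite lerDl; exact: P2_ge0.
have main : forall (i : 'I_n) (x y : ext Xi n),
    star (fun a b => 0 < Pi pi Q Ep V i a b) x y ->
    0 < omega Q Ep i x.1 -> y.2 i != x.2 i ->
    star (fun a b => 0 < Kmix pi Q Ep V a b) x (Sflip i x).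
  move=> i x y; elim => [a|a b c hab _ IH] ha; first by rewrite eqxx.
  have Kab : 0 < Kmix pi Q Ep V a b := lt_le_trans (mulr_gt0 ha hab) (K_ge i a b).
  case: (classify _ _ _ hab) => [eb|[e2 hq]] hc.
    by apply: star1; rewrite -eb.
  have hb : 0 < omega Q Ep i b.1.
    by rewrite lt_neqAle eq_sym (omega_ne0 _ _ _ hq) omega_ge0.
  have := IH hb; rewrite e2 => /(_ hc) sb.
  apply: star_step Kab (star_snoc sb _).
  exact: lt_le_trans (mulr_gt0 hb (rev _ _ _ hq)) (K_ge i (Sflip i b) (Sflip i a)).
move=> xi th i hw.
have [m [xi' hk]] := A44 xi th i hw.
have sp := kpow_path (Pi_ge0 i) hk.
apply: path_kpow; apply: (main i _ _ sp hw) => /=.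
by rewrite /flip ffunE eqxx; case: (th i).
Qed.
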